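(* Let $\Lambda$ be a row-finite $2$-graph with no sources, and suppose $(\alpha_1,\alpha_2,\beta_1,\beta_2)$ is a $(1,1)$-aperiodic quartet at $u\in\Lambda^0$. Then $\Lambda$ has no local periodicity at $u$.
   Context: A $k$-graph is a countable category $\Lambda$ with a functor $d:\Lambda\to\mathbb{N}^k$ satisfying the factorization property: whenever $d(\lambda)=m+n$ there are unique $\mu,\nu$ with $\lambda=\mu\nu$, $d(\mu)=m$, $d(\nu)=n$. $\Lambda^n=d^{-1}(n)$, $\Lambda^0$ the vertices, $r,s$ range and source, $v\Lambda=\{\lambda:r(\lambda)=v\}$, $v\Lambda^n w=\{\lambda: r(\lambda)=v, d(\lambda)=n, s(\lambda)=w\}$. Row-finite: each $v\Lambda^n$ finite; no sources: $v\Lambda^{e_i}\ne\emptyset$ for all $v,i$ ($e_1,e_2$ standard generators of $\mathbb{N}^2$). For $0\le m\le n\le d(\lambda)$, $\lambda(m,n)$ is the unique path with $\lambda=\lambda'\lambda(m,n)\lambda''$, $d(\lambda')=m$, $d(\lambda(m,n))=n-m$. $\Lambda$ has no local periodicity at $v$ if for each $m\neq n\in\mathbb{N}^k$ there is $\lambda\in v\Lambda$ with $d(\lambda)\ge m\vee n$ and $\lambda(m,m+d(\lambda)-(m\vee n))\neq\lambda(n,n+d(\lambda)-(m\vee n))$ ($\vee$ = coordinatewise max). For positive integers $a,b$, an $(a,b)$-aperiodic quartet at $u$ is a tuple $(\alpha_1,\alpha_2,\beta_1,\beta_2)$ with $\alpha_1\neq\alpha_2$ in $u\Lambda^{ae_1}u$,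 $\beta_1\neq\beta_2$ in $u\Lambda^{be_2}u$, such that $\beta_2\alpha_1=\alpha_1\beta_2$, $\beta_2\alpha_2=\alpha_2\beta_2$, $\beta_1\alpha_1=\alpha_2\beta_1$, $\beta_1\alpha_2=\alpha_1\beta_1$. *)

(* Defs.v *)
From mathcomp Require Import all_boot.
Set Implicit Arguments. Unset Strict Implicit. Unset Printing Implicit Defensive.

Definition degk (k : nat) := {ffun 'I_k -> nat}.

Definition dadd k (m n : degk k) : degk k := [ffun i => m i + n i].
Definition dsub k (m n : degk k) : degk k := [ffun i => m i - n i].
Definition dmax k (m n : degk k) : degk k := [ffun i => maxn (m i) (n i)].
Definition dzero k : degk k := [ffun _ => 0].
Definition dle k (m n : degk k) : Prop := forall i, m i <= n i.
Definition dunit k (i : 'I_k) : degk k := [ffun j => nat_of_bool (j == i)].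

(* Composition is written comp mu nu = "mu nu" (mu after nu, s mu = r nu). *)
Record kgraph (k : nat) := KGraph {
  Obj : countType;
  Mor : countType;
  rng : Mor -> Obj;
  src : Mor -> Obj;
  idm : Obj -> Mor;
  comp : Mor -> Mor -> Mor;
  deg : Mor -> degk k;
  rng_id : forall v, rng (idm v) = v;
  src_id : forall v, src (idm v) = v;
  rng_comp : forall mu nu, src mu = rng nu -> rng (comp mu nu) = rng mu;
  src_comp : forall mu nu, src mu = rng nu -> src (comp mu nu) = src nu;
  comp_assoc : forall la mu nu, src la = rng mu -> src mu = rng nu ->
     comp la (comp mu nu) = comp (comp la mu) nu;
  comp_id_l : forall mu, comp (idm (rng mu)) mu = mu;
  comp_id_r : forall mu, comp mu (idm (src mu)) = mu;
  deg_id : forall v, deg (idm v) = dzero k;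
  deg_comp : forall mu nu, src mu = rng nu ->
     deg (comp mu nu) = dadd (deg mu) (deg nu);
  factorization : forall la (m n : degk k), deg la = dadd m n ->
     exists! p : Mor * Mor,
       [/\ src p.1 = rng p.2, la = comp p.1 p.2, deg p.1 = m & deg p.2 = n]
}.


Arguments rng {_} _ _.
Arguments src {_} _ _.
Arguments idm {_} _ _.
Arguments deg {_} _ _.
Arguments comp {_} _ _ _.
Section Defs.
Variables (k : nat) (L : kgraph k).

Definition row_finite : Prop :=
  forall (v : Obj L) (n : degk k), exists s : seq (Mor L),
    forall la, rng L la = v -> deg L la = n -> la \in s.

Definition no_sources : Prop :=
  forall (v : Obj L) (i : 'I_k), exists la, rng L la = v /\ deg L la = dunit i.

(* seg la m n mu : mu = la(m,n), i.e. la = la' mu la'' with d(la') = m,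
   d(mu) = n - m (for 0 <= m <= n <= d(la) this mu exists and is unique) *)
Definition seg (la : Mor L) (m n : degk k) (mu : Mor L) : Prop :=
  exists la' la'' : Mor L,
    [/\ src L la' = rng L mu, src L mu = rng L la'',
        la = comp L la' (comp L mu la''), deg L la' = m
      & deg L mu = dsub n m].

Definition no_local_periodicity (v : Obj L) : Prop :=
  forall m n : degk k, m <> n ->
    exists la : Mor L, rng L la = v /\ dle (dmax m n) (deg L la) /\
      exists mu1 mu2 : Mor L,
        [/\ seg la m (dsub (dadd m (deg L la)) (dmax m n)) mu1,
            seg la n (dsub (dadd n (deg L la)) (dmax m n)) mu2
          & mu1 <> mu2].

Definition loop_of (u : Obj L) (n : degk k) (la : Mor L) : Prop :=
  [/\ rng L la = u, deg L la = n & src L la = u].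
End Defs.
Arguments no_local_periodicity {k} L v.
Arguments seg {k} L la m n mu.
Arguments no_sources {k} L.
Arguments row_finite {k} L.

Definition e1 : 'I_2 := ord0.
Definition e2 : 'I_2 := ord_max.

Definition aperiodic_quartet (L : kgraph 2) (a b : nat) (u : Obj L)
    (al1 al2 be1 be2 : Mor L) : Prop :=
  [/\ 0 < a, 0 < b,
      [/\ al1 <> al2,
          loop_of u [ffun i => a * dunit e1 i] al1
        & loop_of u [ffun i => a * dunit e1 i] al2],
      [/\ be1 <> be2,
          loop_of u [ffun i => b * dunit e2 i] be1
        & loop_of u [ffun i => b * dunit e2 i] be2]
    & [/\ comp L be2 al1 = comp L al1 be2,
          comp L be2 al2 = comp L al2 be2,
          comp L be1 al1 = comp L al2 be1
        & comp L be1 al2 = comp L al1 be1]].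
Arguments aperiodic_quartet : clear implicits.

(* Main.v *)
Require Import Defs.
From mathcomp Require Import all_boot.
From mathcomp Require Import zify.
Set Implicit Arguments. Unset Strict Implicit. Unset Printing Implicit Defensive.

Definition D (a b : nat) : degk 2 := [ffun i : 'I_2 => if nat_of_ord i == 0 then a else b].

Lemma D_eq a b c d : a = c -> b = d -> D a b = D c d.
Proof. by move=> -> ->. Qed.

Lemma D_eta (m : degk 2) : m = D (m ord0) (m ord_max).
Proof.
apply/ffunP => i; rewrite ffunE; case: i => [[|[|//]] Hi] /=; congr (m _); exact: val_inj.
Qed.

Lemma D_inj a b c d : D a b = D c d -> a = c /\ b = d.
Proof.
move=> h; split.
- by have := congr1 (fun f : degk 2 => f ord0) h; rewrite !ffunE.
- by have := congr1 (fun f : degk 2 => f ord_max) h; rewrite !ffunE.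
Qed.

Lemma dadd_D a b c d : dadd (D a b) (D c d) = D (a + c) (b + d).
Proof. by apply/ffunP => i; rewrite !ffunE; case: ifP. Qed.
Lemma dsub_D a b c d : dsub (D a b) (D c d) = D (a - c) (b - d).
Proof. by apply/ffunP => i; rewrite !ffunE; case: ifP. Qed.
Lemma dmax_D a b c d : dmax (D a b) (D c d) = D (maxn a c) (maxn b d).
Proof. by apply/ffunP => i; rewrite !ffunE; case: ifP. Qed.
Lemma dle_D a b c d : a <= c -> b <= d -> dle (D a b) (D c d).
Proof. by move=> h1 h2 i; rewrite !ffunE; case: ifP. Qed.
Lemma dzero_D : dzero 2 = D 0 0.
Proof. by apply/ffunP => i; rewrite !ffunE; case: ifP. Qed.
Lemma de1_D : [ffun i => 1 * dunit e1 i] = D 1 0.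
Proof. by apply/ffunP => i; rewrite !ffunE; case: i => [[|[|//]] Hi]. Qed.
Lemma de2_D : [ffun i => 1 * dunit e2 i] = D 0 1.
Proof. by apply/ffunP => i; rewrite !ffunE; case: i => [[|[|//]] Hi]. Qed.

Section Loops.
Variables (L : kgraph 2) (u : Obj L).
Local Notation "x ⊙ y" := (Defs.comp L x y) (at level 40, left associativity).
Definition loop (x : Mor L) := rng L x = u /\ src L x = u.

Lemma loop_comp x y : loop x -> loop y -> loop (x ⊙ y).
Proof.
move=> [rx sx] [ry sy]; have e : src L x = rng L y by rewrite sx ry.
by split; [rewrite rng_comp | rewrite src_comp].
Qed.
Lemma loop_id : loop (idm L u).
Proof. by split; [rewrite rng_id | rewrite src_id]. Qed.
Lemma srcrng x y : loop x -> loop y -> src L x = rng L y.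
Proof. by move=> [_ ->] [-> _]. Qed.
Lemma assoc x y z : loop x -> loop y -> loop z -> x ⊙ (y ⊙ z) = x ⊙ y ⊙ z.
Proof. by move=> hx hy hz; apply: comp_assoc; apply: srcrng. Qed.
Lemma id_l y : loop y -> idm L u ⊙ y = y.
Proof. by move=> [ry _]; have := comp_id_l y; rewrite ry. Qed.
Lemma id_r y : loop y -> y ⊙ idm L u = y.
Proof. by move=> [_ sy]; have := comp_id_r y; rewrite sy. Qed.
Lemma degcE x y : loop x -> loop y -> deg L (x ⊙ y) = dadd (deg L x) (deg L y).
Proof. by move=> hx hy; apply: deg_comp; apply: srcrng. Qed.

Fixpoint pow (x : Mor L) n := if n is n'.+1 then pow x n' ⊙ x else idm L u.
Lemma loop_pow x n : loop x -> loop (pow x n).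
Proof. by move=> hx; elim: n => [|n ih] /=; [exact: loop_id | exact: loop_comp]. Qed.

Ltac lp := solve [repeat (first [apply: loop_comp | apply: loop_pow | apply: loop_id | assumption])].

Lemma pow_add x i j : loop x -> pow x (i + j) = pow x i ⊙ pow x j.
Proof.
move=> hx; elim: j => [|j ih]; first by rewrite addn0 /= id_r //; lp.
by rewrite addnS /= ih assoc //; lp.
Qed.

Lemma deg_pow x n p q : loop x -> deg L x = D p q -> deg L (pow x n) = D (n * p) (n * q).
Proof.
move=> hx dx; elim: n => [|n ih] /=; first by rewrite deg_id dzero_D.
rewrite degcE; try lp. by rewrite ih dx dadd_D; apply: D_eq; rewrite mulSnr.
Qed.

Definition comm x y := x ⊙ y = y ⊙ x.
Lemma comm_sym x y : comm x y -> comm y x.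
Proof. by []. Qed.
Lemma comm_powl y x j : loop y -> loop x -> comm y x -> comm (pow y j) x.
Proof.
move=> hy hx c; elim: j => [|j ih] /=; first by rewrite /comm id_l // id_r.
rewrite /comm -assoc; try lp. rewrite c assoc; try lp. rewrite ih -assoc //; lp.
Qed.
Lemma comm_compr y x z : loop y -> loop x -> loop z -> comm y x -> comm y z -> comm y (x ⊙ z).
Proof.
move=> hy hx hz c1 c2; rewrite /comm assoc; try lp. rewrite c1 -assoc; try lp.
rewrite c2 assoc //; lp.
Qed.
End Loops.

Ltac lp := solve [repeat (first [apply: loop_comp | apply: loop_pow | apply: loop_id | assumption])].

Definition Pnlp (L : kgraph 2) (u : Obj L) (m n : degk 2) : Prop :=
    exists la : Mor L, rng L la = u /\ dle (dmax m n) (deg L la) /\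
      exists mu1 mu2 : Mor L,
        [/\ seg L la m (dsub (dadd m (deg L la)) (dmax m n)) mu1,
            seg L la n (dsub (dadd n (deg L la)) (dmax m n)) mu2
          & mu1 <> mu2].

Arguments Pnlp : clear implicits.

Lemma dmaxC k (m n : degk k) : dmax m n = dmax n m.
Proof. by apply/ffunP => i; rewrite !ffunE maxnC. Qed.

Lemma Pnlp_sym L u m n : Pnlp L u m n -> Pnlp L u n m.
Proof.
move=> [la [h1 [h2 [mu1 [mu2 [s1 s2 ne]]]]]]; exists la; rewrite dmaxC; split=> //; split=> //.
by exists mu2, mu1; split=> //; apply/nesym.
Qed.

Section Main.
Variables (L : kgraph 2) (u : Obj L) (a1 a2 b1 b2 : Mor L).
Local Notation "x ⊙ y" := (Defs.comp L x y) (at level 40, left associativity).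
Hypotheses (la1 : loop u a1) (la2 : loop u a2) (lb1 : loop u b1) (lb2 : loop u b2).
Hypotheses (da1 : deg L a1 = D 1 0) (da2 : deg L a2 = D 1 0)
  (db1 : deg L b1 = D 0 1) (db2 : deg L b2 = D 0 1).
Hypotheses (c21 : comm b2 a1) (c22 : comm b2 a2) (na : a1 <> a2) (nb : b1 <> b2).

Lemma dpa n : deg L (pow u a2 n) = D n 0.
Proof. rewrite (deg_pow _ la2 da2); apply: D_eq; lia. Qed.
Lemma dpb n : deg L (pow u b2 n) = D 0 n.
Proof. rewrite (deg_pow _ lb2 db2); apply: D_eq; lia. Qed.

Ltac dg := rewrite ?dpa ?dpb ?db1 ?db2 ?da1 ?da2 ?dadd_D ?dsub_D ?dmax_D; apply: D_eq; lia.

Lemma comm_step y x r : loop u y -> loop u x -> loop u r -> comm y x ->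
  x ⊙ (y ⊙ r) = y ⊙ (x ⊙ r).
Proof. move=> hy hx hr c; rewrite !(assoc (u:=u)) // c //. Qed.

Lemma coord1 c b d : b < d -> Pnlp L u (D c b) (D c d).
Proof.
move=> lt; have [k ->] : exists k, d = b + k.+1 by exists (d - b).-1; lia.
have dl : deg L (pow u a2 c ⊙ pow u b2 b ⊙ (b1 ⊙ pow u b2 k.+1)) = D c (b + k.+2).
  rewrite !(degcE (u:=u)); try lp. dg.
exists (pow u a2 c ⊙ pow u b2 b ⊙ (b1 ⊙ pow u b2 k.+1)); split.
  have [-> _] : loop u (pow u a2 c ⊙ pow u b2 b ⊙ (b1 ⊙ pow u b2 k.+1)) by lp.
  done.
rewrite dl dmax_D; split; first by apply: dle_D; lia.
exists b1, b2; split=> //.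
- exists (pow u a2 c ⊙ pow u b2 b), (pow u b2 k.+1); split=> //.
  + apply: (srcrng (u:=u)); lp.
  + apply: (srcrng (u:=u)); lp.
  + rewrite (degcE (u:=u)); try lp. dg.
  + dg.
- exists (pow u a2 c ⊙ pow u b2 b ⊙ (b1 ⊙ pow u b2 k)), (idm L u); split=> //.
  + apply: (srcrng (u:=u)); lp.
  + apply: (srcrng (u:=u)); lp.
  + rewrite id_r //= !(assoc (u:=u)) //; lp.
  + rewrite !(degcE (u:=u)); try lp. dg.
  + dg.
Qed.

Lemma cpa2 j : comm (pow u b2 j) a2.
Proof. apply: comm_powl => //. Qed.
Lemma cpa1 j : comm (pow u b2 j) a1.
Proof. apply: comm_powl => //. Qed.
Lemma cpk j k : comm (pow u b2 j) (pow u a2 k).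
Proof.
apply: comm_powl => //; try lp.
apply: comm_sym; apply: comm_powl => //; try exact: comm_sym.
Qed.
Lemma csa1 j r : loop u r -> a1 ⊙ (pow u b2 j ⊙ r) = pow u b2 j ⊙ (a1 ⊙ r).
Proof. move=> hr; apply: comm_step => //; [lp | exact: cpa1]. Qed.
Lemma csa2 j r : loop u r -> a2 ⊙ (pow u b2 j ⊙ r) = pow u b2 j ⊙ (a2 ⊙ r).
Proof. move=> hr; apply: comm_step => //; [lp | exact: cpa2]. Qed.
Lemma csk j k r : loop u r -> pow u a2 k ⊙ (pow u b2 j ⊙ r) = pow u b2 j ⊙ (pow u a2 k ⊙ r).
Proof. move=> hr; apply: comm_step => //; [lp | lp | exact: cpk]. Qed.
Lemma pbsplit M b : b <= M -> pow u b2 M = pow u b2 b ⊙ pow u b2 (M - b).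
Proof. move=> h; rewrite -pow_add //; congr (pow _ _ _); lia. Qed.

Lemma coord0 a b c d : a < c -> Pnlp L u (D a b) (D c d).
Proof.
move=> lt; have [k ->] : exists k, c = a + k.+1 by exists (c - a).-1; lia.
set M := maxn b d.
have dl : deg L (pow u a2 a ⊙ ((a1 ⊙ pow u a2 k) ⊙ (a2 ⊙ pow u b2 M))) = D (a + k.+2) M.
  rewrite !(degcE (u:=u)); try lp. dg.
exists (pow u a2 a ⊙ ((a1 ⊙ pow u a2 k) ⊙ (a2 ⊙ pow u b2 M))); split.
  have [-> _] : loop u (pow u a2 a ⊙ ((a1 ⊙ pow u a2 k) ⊙ (a2 ⊙ pow u b2 M))) by lp.
  done.
rewrite dl dmax_D; split; first by apply: dle_D; lia.
exists a1, a2; split=> //.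
- exists (pow u a2 a ⊙ pow u b2 b), (pow u a2 k ⊙ (a2 ⊙ pow u b2 (M - b))); split=> //.
  + apply: (srcrng (u:=u)); lp.
  + apply: (srcrng (u:=u)); lp.
  + rewrite (pbsplit (b:=b)); last by lia.
    rewrite -!(assoc (u:=u)); try lp.
    rewrite csa2; try lp. rewrite csk; try lp. rewrite csa1 //; lp.
  + rewrite (degcE (u:=u)); try lp. dg.
  + dg.
- exists (pow u a2 a ⊙ ((a1 ⊙ pow u a2 k) ⊙ pow u b2 d)), (pow u b2 (M - d)); split=> //.
  + apply: (srcrng (u:=u)); lp.
  + apply: (srcrng (u:=u)); lp.
  + rewrite (pbsplit (b:=d)); last by lia.
    rewrite -!(assoc (u:=u)); try lp.
    rewrite csa2 //; lp.
  + rewrite !(degcE (u:=u)); try lp. dg.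
  + dg.
Qed.

End Main.


Theorem theorem3p5 (L : kgraph 2) (u : Obj L) (al1 al2 be1 be2 : Mor L) :
  row_finite L -> no_sources L ->
  aperiodic_quartet L 1 1 u al1 al2 be1 be2 ->
  no_local_periodicity L u.
Proof.
move=> _ _ [_ _ [na [r1 d1 s1] [r2 d2 s2]] [nb [r3 d3 s3] [r4 d4 s4]] [c21 c22 _ _]].
rewrite de1_D in d1 d2; rewrite de2_D in d3 d4.
have l1 : loop u al1 by []. have l2 : loop u al2 by [].
have l3 : loop u be1 by []. have l4 : loop u be2 by [].
have C0 := coord0 l1 l2 l4 d1 d2 d4 c21 c22 na.
have C1 := coord1 l2 l3 l4 d2 d3 d4 nb.
move=> m n hmn; rewrite (D_eta m) (D_eta n) in hmn *.
change (Pnlp L u (D (m ord0) (m ord_max)) (D (n ord0) (n ord_max))).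
case: (ltngtP (m ord0) (n ord0)) => h0.
- exact: C0.
- apply: Pnlp_sym; exact: C0.
rewrite h0 in hmn *.
case: (ltngtP (m ord_max) (n ord_max)) => h1.
- exact: C1.
- apply: Pnlp_sym; exact: C1.
by rewrite h1 in hmn.
Qed.
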